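(* Let $n\ge 1$, $d\ge 0$, and let $p\in\mathcal H(n,d)$ be a generalized Whitney mapping. Then $N(p)\ge d(n-1)+1$.
   Context: Write $s(x)=\sum_{j=1}^n x_j$. $\mathcal J(n)$ is the set of real polynomials $p\in\mathbb R[x_1,\dots,x_n]$ with $p=1$ on the hyperplane $\{s=1\}$; $\mathcal P(n)$ is the set of real polynomials with all coefficients nonnegative; $\mathcal H(n)=\mathcal J(n)\cap\mathcal P(n)$, and $\mathcal H(n,d)$ is the set of elements of $\mathcal H(n)$ of total degree exactly $d$. $N(p)$ is the number of distinct monomials occurring (with nonzero coefficient) in $p$. For polynomials $g,u$ put $X_u(g)=g-u+s u$. An element $p\in\mathcal H(n,d)$ is a generalized Whitney mapping if there exist $g_0,\dots,g_d\in\mathcal H(n)$ with $g_0=1$, $g_d=p$, $\deg g_j=j$ for each $j$, and for each $j>0$, $g_j=X_{u_j}(g_{j-1})$ for some polynomial $u_j$ such that both $u_j$ and $g_{j-1}-u_j$ have nonnegative coefficients. *)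

(* Defs.v *)
From HB Require Import structures.
From mathcomp Require Import all_boot all_order all_algebra.
From mathcomp Require Import reals.
From mathcomp Require Import mpoly.
Set Implicit Arguments. Unset Strict Implicit. Unset Printing Implicit Defensive.
Import Order.TTheory GRing.Theory Num.Theory.
Local Open Scope ring_scope.

Definition spoly (R : realType) (n : nat) : {mpoly R[n]} := \sum_(i < n) 'X_i.

Definition inJ (R : realType) (n : nat) (p : {mpoly R[n]}) : Prop :=
  forall x : 'I_n -> R, \sum_(i < n) x i = 1 -> p.@[x] = 1.

Definition inP (R : realType) (n : nat) (p : {mpoly R[n]}) : Prop :=
  forall m : 'X_{1..n}, 0 <= p@_m.

Definition inH (R : realType) (n : nat) (p : {mpoly R[n]}) : Prop :=
  inJ p /\ inP p.

(* total degree exactly d (msize p = 1 + total degree, msize 0 = 0) *)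
Definition has_deg (R : realType) (n : nat) (p : {mpoly R[n]}) (d : nat) : Prop :=
  msize p = d.+1.

Definition inHd (R : realType) (n : nat) (p : {mpoly R[n]}) (d : nat) : Prop :=
  inH p /\ has_deg p d.

Definition Nmon (R : realType) (n : nat) (p : {mpoly R[n]}) : nat :=
  size (msupp p).

Definition Xop (R : realType) (n : nat) (u g : {mpoly R[n]}) : {mpoly R[n]} :=
  g - u + spoly R n * u.

Definition gen_whitney (R : realType) (n : nat) (p : {mpoly R[n]}) (d : nat) : Prop :=
  inHd p d /\
  exists g : nat -> {mpoly R[n]},
    [/\ g 0%N = 1, g d = p,
        (forall j, (j <= d)%N -> inH (g j) /\ has_deg (g j) j) &
        (forall j, (0 < j <= d)%N ->
           exists u : {mpoly R[n]},
             [/\ g j = Xop u (g j.-1), inP u & inP (g j.-1 - u)])].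

(* Main.v *)
Require Import Defs.
From HB Require Import structures.
From mathcomp Require Import all_boot all_order all_algebra.
From mathcomp Require Import reals.
From mathcomp Require Import mpoly.
From mathcomp Require Import zify.
Set Implicit Arguments. Unset Strict Implicit. Unset Printing Implicit Defensive.
Import Order.TTheory GRing.Theory Num.Theory.
Local Open Scope ring_scope.

Section Aux.
Variables (R : realType) (n : nat).
Implicit Types (p q u G : {mpoly R[n]}).

Lemma inP_mul p q : inP p -> inP q -> inP (p * q).
Proof. move=> hp hq m; rewrite mcoeffM; apply: sumr_ge0 => k _; exact: mulr_ge0. Qed.

Lemma inP_X (i : 'I_n) : inP ('X_i : {mpoly R[n]}).
Proof. by move=> m; rewrite mcoeffX ler0n. Qed.

Lemma inP_spoly : inP (spoly R n).
Proof.
move=> m; rewrite /spoly raddf_sum /=; apply: sumr_ge0 => i _; exact: inP_X.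
Qed.

Lemma coefXM u (i : 'I_n) k : (u * 'X_i)@_(k + U_(i))%MM = u@_k.
Proof. by rewrite addmC mcoeffMX. Qed.

Lemma sX_ge u (i : 'I_n) m : inP u -> (u * 'X_i)@_m <= (spoly R n * u)@_m.
Proof.
move=> hu; rewrite /spoly mulr_suml raddf_sum /= (bigD1 i) //= mulrC lerDl.
by apply: sumr_ge0 => k _; apply: inP_mul => //; exact: inP_X.
Qed.

Lemma side G u (i : 'I_n) k : inP u -> inP (G - u) -> u@_k != 0 ->
  (Xop u G)@_(k + U_(i))%MM != 0.
Proof.
move=> hu hGu hk; apply: lt0r_neq0; rewrite /Xop mcoeffD.
have h1 := hGu (k + U_(i))%MM.
have h2 := sX_ge i (k + U_(i))%MM hu; rewrite coefXM in h2.
have h3 : 0 < u@_k by rewrite lt_def hk hu.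
by apply: (lt_le_trans h3); apply: (le_trans h2); rewrite lerDr.
Qed.

Lemma u_le G u k : inP u -> inP (G - u) -> u@_k <= G@_k.
Proof. by move=> hu hGu; have := hGu k; rewrite mcoeffB subr_ge0. Qed.

Lemma u_supp G u k : inP u -> inP (G - u) -> u@_k != 0 -> G@_k != 0.
Proof.
move=> hu hGu hk; apply: lt0r_neq0.
have h3 : 0 < u@_k by rewrite lt_def hk hu.
exact: (lt_le_trans h3 (u_le k hu hGu)).
Qed.

Lemma desc G u m (i : 'I_n) : inP u -> inP (G - u) -> G@_m != 0 ->
  (Xop u G)@_m != 0 \/ (Xop u G)@_(m + U_(i))%MM != 0.
Proof.
move=> hu hGu hm; case: (eqVneq ((G - u)@_m) 0) => h.
- right; apply: side => //.
  by move/eqP: h; rewrite mcoeffB subr_eq0 => /eqP <-.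
- left; apply: lt0r_neq0; rewrite /Xop mcoeffD.
  have h3 : 0 < (G - u)@_m by rewrite lt_def h hGu.
  apply: (lt_le_trans h3); rewrite lerDl.
  exact: (inP_mul inP_spoly hu).
Qed.

Lemma chain_step G u m j : inP u -> inP (G - u) -> msize G = j ->
  (j <= mdeg m)%N -> (Xop u G)@_m != 0 ->
  exists (i : 'I_n) k, m = (k + U_(i))%MM /\ u@_k != 0.
Proof.
move=> hu hGu hs hj hm.
have hG : G@_m = 0.
  by apply/eqP; rewrite mcoeff_eq0; apply: msize_mdeg_ge; rewrite hs.
have hU : u@_m = 0.
  by apply/eqP; rewrite eq_le hu andbT -hG; exact: u_le.
move: hm; rewrite /Xop mcoeffD mcoeffB hG hU subrr add0r.
rewrite /spoly mulr_suml raddf_sum /=.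
case: (pickP (fun i : 'I_n => ('X_i * u)@_m != 0)) => [i hi|h0]; last first.
  by rewrite big1 ?eqxx // => i _; apply/eqP; move/negbFE: (h0 i).
move=> _; move: hi; rewrite mulrC -mcoeff_msupp (perm_mem (msuppMX _ _)).
case/mapP => k hk ->; exists i, k; split; first by rewrite addmC.
by rewrite -mcoeff_msupp.
Qed.

Section Chain.
Variables (g : nat -> {mpoly R[n]}) (d : nat).
Hypothesis hstep : forall j, (0 < j <= d)%N ->
  exists u : {mpoly R[n]}, [/\ g j = Xop u (g j.-1), inP u & inP (g j.-1 - u)].
Hypothesis hdeg : forall j, (j <= d)%N -> msize (g j) = j.+1.

Lemma descend k : forall t m, (t + k = d)%N -> (g t)@_m != 0 ->
  forall i : 'I_n, exists b, (g d)@_(m + U_(i) *+ b)%MM != 0.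
Proof.
elim: k => [|k ih] t m htk hm i.
  by exists 0%N; rewrite mulm0n addm0 -htk addn0.
have ht : (0 < t.+1 <= d)%N by lia.
have [u [hgu hu hGu]] := hstep ht; rewrite /= in hgu.
have htk' : (t.+1 + k = d)%N by lia.
case: (desc i hu hGu hm) => h; rewrite -hgu in h.
  exact: ih htk' h i.
have [b hb] := ih _ _ htk' h i; exists b.+1; by rewrite mulmS addmA.
Qed.

Lemma chain (i0 : 'I_n) j : (j <= d)%N -> forall m, mdeg m = j -> (g j)@_m != 0 ->
  exists (c : nat -> 'X_{1..n}) (ii : nat -> 'I_n), c j.+1 = m /\
   forall l, (0 < l <= j)%N -> c l.+1 = (c l + U_(ii l))%MM /\
        forall i : 'I_n, (g l)@_(c l + U_(i))%MM != 0.
Proof.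
elim: j => [|j ih] hj m hm hgm.
  by exists (fun _ => m), (fun _ => i0); split => // l hl; exfalso; lia.
have hj' : (0 < j.+1 <= d)%N by lia.
have [u [hgu hu hGu]] := hstep hj'; rewrite /= in hgu.
rewrite hgu in hgm.
have hmj : (j.+1 <= mdeg m)%N by rewrite hm.
have [i [k [hmk hk]]] := chain_step hu hGu (hdeg (ltnW hj)) hmj hgm.
have hkd : mdeg k = j by move: hm; rewrite hmk mdegD mdeg1 addn1 => [[]].
have hgk : (g j)@_k != 0 := u_supp hu hGu hk.
have [c [ii [hc hcl]]] := ih (ltnW hj) k hkd hgk.
exists (fun x => if x == j.+2 then m else c x), (fun x => if x == j.+1 then i else ii x).
split; first by rewrite eqxx.
move=> l /andP[l0 lj].
case: (eqVneq l j.+1) => [->|hl].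
  rewrite eqxx (ltn_eqF (ltnSn j.+1)).
  split; first by rewrite hc hmk.
  by move=> i'; rewrite hc hgu; apply: side.
have hl' : (l < j.+1)%N by rewrite ltn_neqAle hl lj.
rewrite eqSS (negbTE hl) (ltn_eqF (_ : l < j.+2)%N); last by lia.
apply: hcl; lia.
Qed.

Lemma chain_mono (c : nat -> 'X_{1..n}) (ii : nat -> 'I_n) :
  (forall l, (0 < l <= d)%N -> c l.+1 = (c l + U_(ii l))%MM) ->
  forall k l, (0 < l)%N -> (l < k)%N -> (k <= d.+1)%N ->
  (forall x, (c l x <= c k x)%N) /\ ((c l (ii l)).+1 <= c k (ii l))%N.
Proof.
move=> hc; elim=> [|k ih] l l0 lk kd; first by [].
have hck : c k.+1 = (c k + U_(ii k))%MM by apply: hc; lia.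
case: (ltngtP l k) => h.
- have [h1 h2] := ih l l0 h (ltnW kd).
  split=> [x|]; rewrite hck mnmDE.
    exact: leq_trans (h1 x) (leq_addr _ _).
  exact: leq_trans h2 (leq_addr _ _).
- lia.
- subst; rewrite hck; split=> [x|]; rewrite mnmDE ?mnm1E ?eqxx.
    exact: leq_addr.
  by rewrite addn1.
Qed.

End Chain.
End Aux.

Lemma uniq_dep (m : nat) (s : seq nat) (t : nat -> seq 'I_m) :
  uniq s -> (forall x, uniq (t x)) -> uniq [seq (x, y) | x <- s, y <- t x].
Proof.
move=> us ut; elim: s us => //= x s IH /andP[xs us].
rewrite cat_uniq IH // andbT map_inj_uniq ?ut //=; last by move=> a b [].
apply/hasPn => z /allpairsPdep [x' [y [hx' _ ->]]].
apply/mapP => [[y' _ [ex _]]]; by rewrite -ex hx' in xs.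
Qed.

Lemma cnt_neq (m : nat) (x : 'I_m) : count (fun i : 'I_m => i != x) (enum 'I_m) = m.-1.
Proof.
have := count_predC (pred1 x) (enum 'I_m).

move=> h.
have -> : count (fun i : 'I_m => i != x) (enum 'I_m) = count (predC (pred1 x)) (enum 'I_m).
  by apply: eq_count.
move: h; rewrite (count_uniq_mem _ (enum_uniq _)) mem_enum size_enum_ord /=; lia.
Qed.

Lemma sumn_const (T : Type) (s : seq T) k : sumn [seq k | _ <- s] = (size s * k)%N.
Proof. by elim: s => //= _ s ->; rewrite mulSn. Qed.

Theorem lemma2 (R : realType) (n d : nat) (p : {mpoly R[n]}) :
  (1 <= n)%N -> inHd p d -> gen_whitney p d ->
  (d * (n - 1) + 1 <= Nmon p)%N.
Proof.
move=> hn [_ hPd] [_ [g [g0 gd hg hstep]]].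
have hdeg : forall j, (j <= d)%N -> msize (g j) = j.+1 by move=> j /hg [].
pose i0 : 'I_n := Ordinal hn.
have p0 : p != 0 by apply/eqP => p0; move: hPd; rewrite /has_deg p0 msize0.
have hm := mlead_supp p0; have hmd := mlead_deg p0.
set m := mlead p in hm hmd.
have hmd' : mdeg m = d by move: hmd; rewrite hPd => [[]].
have hgm : (g d)@_m != 0 by rewrite gd -mcoeff_msupp.
have [c [ii [hcd hcl]]] := chain hstep hdeg i0 (leqnn d) hmd' hgm.
have hc : forall l, (0 < l <= d)%N -> c l.+1 = (c l + U_(ii l))%MM.
  by move=> l hl; case: (hcl l hl).
pose P l (i : 'I_n) b := (0 < l <= d)%N ==> ((g d)@_((c l + U_(i)) + U_(i) *+ b)%MM != 0).
have Hex : forall l i, exists b, P l i b.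
  move=> l i; rewrite /P; case h: (0 < l <= d)%N; last by exists 0%N.
  have [_ hs] := hcl l h.
  have hld : (l + (d - l))%N = d by lia.
  have [b hb] := descend hstep hld (hs i) i.
  by exists b.
pose bf l i := ex_minn (Hex l i).
have Hbf : forall l i, P l i (bf l i) by move=> l i; rewrite /bf; case: ex_minnP.
pose idx := [seq (l, i) | l <- iota 1 d, i <- [seq i <- enum 'I_n | i != ii l]].
pose f := fun li : nat * 'I_n => ((c li.1 + U_(li.2)) + U_(li.2) *+ bf li.1 li.2)%MM.
have fE : forall l i x, f (l, i) x = (c l x + (i == x) + (i == x) * bf l i)%N.
  by move=> l i x; rewrite /f /= !mnmDE mulmnE mnm1E.
have hmono := chain_mono hc.
have hidx : forall li, li \in idx -> [/\ (0 < li.1 <= d)%N & li.2 != ii li.1].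
  move=> li /allpairsPdep [l [i [hl hi ->]]] /=.
  rewrite mem_iota in hl; rewrite mem_filter in hi; case/andP: hi => hi _.
  split => //; lia.
have finj : {in idx &, injective f}.
  move=> [l i] [l' i'] /hidx [/= hl hi] /hidx [/= hl' hi'] hf.
  have hx x := congr1 (fun mm : 'X_{1..n} => mm x) hf.
  case: (ltngtP l l') => h.
  - have h0 : (0 < l)%N by lia.
    have h1 : (l' <= d.+1)%N by lia.
    have [_ h2] := hmono l' l h0 h h1.
    move: (hx (ii l)); rewrite /= !fE (negbTE hi) /=.
    case: (i' == ii l) => /=; lia.
  - have h0 : (0 < l')%N by lia.
    have h1 : (l <= d.+1)%N by lia.
    have [_ h2] := hmono l l' h0 h h1.
    move: (hx (ii l')); rewrite /= !fE (negbTE hi') /=.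
    case: (i == ii l') => /=; lia.
  - subst l'; move: (hx i); rewrite /= !fE eqxx.
    case: (eqVneq i' i) => [->//|ne] /=; lia.
have Lsub : {subset (m :: map f idx) <= msupp p}.
  move=> z; rewrite inE => /orP [/eqP ->//|/mapP [[l i] hli ->]].
  have [hl _] := hidx _ hli.
  have := Hbf l i; rewrite /P hl /= -gd mcoeff_msupp; done.
have Luniq : uniq (m :: map f idx).
  rewrite /= map_inj_in_uniq // uniq_dep ?iota_uniq ?andbT; last first.
    by move=> x; apply: filter_uniq; apply: enum_uniq.
    by [].
  apply/negP; case/mapP => [[l i] hli hf].
  have [/= hl hi] := hidx _ hli.
  have h0 : (0 < l)%N by lia.
  have h1 : (l < d.+1)%N by lia.
  have [_ h2] := hmono d.+1 l h0 h1 (leqnn _).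
  have := congr1 (fun mm : 'X_{1..n} => mm (ii l)) hf.
  rewrite /= fE (negbTE hi) /= -hcd; lia.
have := uniq_leq_size Luniq Lsub.
rewrite /Nmon /= size_map size_allpairs_dep.
rewrite (eq_map (g := fun _ => n.-1)); last by move=> l; rewrite size_filter cnt_neq.
by rewrite sumn_const size_iota addn1 subn1.
Qed.
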